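(* Let $0<q<\infty$ and $\frac{q}{q+1}<p<\infty$, and let $r=\frac{pq}{pq+p-q}$. Then $$\frac{\sin_{p,q}x}{x}<\left(\frac{p+r\cos_{p,q}^p x}{p+r}\right)^{1/q} \quad \text{for all } x\in\left(0,\tfrac{\pi_{p,q}}{2}\right),$$ and $$\frac{\sinh_{p,q}x}{x}<\left(\frac{p+r\cosh_{p,q}^p x}{p+r}\right)^{1/q} \quad \text{for all } x\in\left(0,\tfrac{\pi_{r,q}}{2}\right).$$
   Context: For $0<q<\infty$ and $\frac{q}{q+1}<p<\infty$: let $F_{p,q}(y)=\int_0^y (1-t^q)^{-1/p}\,dt$ for $y\in[0,1)$ and $\pi_{p,q}=2\int_0^1(1-t^q)^{-1/p}\,dt\in(0,\infty]$ (it equals $\infty$ when $p\le 1$). The function $\sin_{p,q}:[0,\pi_{p,q}/2)\to[0,1)$ is the inverse of $F_{p,q}$ and $\cos_{p,q}x=\frac{d}{dx}\sin_{p,q}x$. Let $G_{p,q}(y)=\int_0^y(1+t^q)^{-1/p}\,dt$ for $y\in[0,\infty)$; its range is $[0,\pi_{r,q}/2)$ with $r=\frac{pq}{pq+p-q}$ (which also satisfies $\frac{q}{q+1}<r<\infty$). The function $\sinh_{p,q}:[0,\pi_{r,q}/2)\to[0,\infty)$ is the inverse of $G_{p,q}$ and $\cosh_{p,q}x=\frac{d}{dx}\sinh_{p,q}x$. *)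

(* Defs.v *)
From Stdlib Require Import Reals ClassicalEpsilon.
From Coquelicot Require Import Coquelicot.
Open Scope R_scope.

(* real power x^a for x >= 0 (with 0^a = 0, used only for a > 0 at x = 0) *)
Definition rpow (x a : R) : R := if Rlt_dec 0 x then Rpower x a else 0.

Definition F_pq (p q y : R) : R :=
  RInt (fun t => rpow (1 - rpow t q) (- (1 / p))) 0 y.

Definition G_pq (p q y : R) : R :=
  RInt (fun t => rpow (1 + rpow t q) (- (1 / p))) 0 y.

(* pi_{p,q}/2 = \int_0^1 (1-t^q)^(-1/p) dt in [0,+oo], i.e. sup_{y in [0,1)} F_{p,q}(y)
   (integrand nonnegative, so the improper integral is this supremum). *)
Definition half_pi_pq (p q : R) : Rbar :=
  Lub_Rbar (fun z => exists y, 0 <= y < 1 /\ z = F_pq p q y).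

Definition sin_pq (p q x : R) : R :=
  epsilon (inhabits 0) (fun y => 0 <= y < 1 /\ F_pq p q y = x).

Definition cos_pq (p q x : R) : R := Derive (sin_pq p q) x.

(* sinh_{p,q} = inverse of G_{p,q} : [0,oo) -> [0, pi_{r,q}/2) *)
Definition sinh_pq (p q x : R) : R :=
  epsilon (inhabits 0) (fun y => 0 <= y /\ G_pq p q y = x).

Definition cosh_pq (p q x : R) : R := Derive (sinh_pq p q) x.

Definition r_pq (p q : R) : R := p * q / (p * q + p - q).

(* Main.v *)
Require Import Defs.
From Stdlib Require Import Reals Ranalysis5 Lra Classical ClassicalEpsilon.
From Coquelicot Require Import Coquelicot.
Open Scope R_scope.

Lemma rpow_pos x a : 0 < x -> rpow x a = Rpower x a.
Proof. intros H; unfold rpow; destruct (Rlt_dec 0 x); [reflexivity|lra]. Qed.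

Lemma rpow_npos x a : x <= 0 -> rpow x a = 0.
Proof. intros H; unfold rpow; destruct (Rlt_dec 0 x); [lra|reflexivity]. Qed.

Lemma rpow_gt0 x a : 0 < x -> 0 < rpow x a.
Proof. intros H; rewrite rpow_pos by exact H; unfold Rpower; apply exp_pos. Qed.

Lemma rpow_ge0 x a : 0 <= rpow x a.
Proof. destruct (Rlt_dec 0 x). apply Rlt_le, rpow_gt0; auto. rewrite rpow_npos; lra. Qed.

Lemma D_mult (f g : R -> R) x df dg : is_derive f x df -> is_derive g x dg ->
  is_derive (fun t => f t * g t) x (df * g x + f x * dg).
Proof. intros H1 H2. apply (is_derive_mult f g x df dg H1 H2). intros; apply Rmult_comm. Qed.

Lemma D_comp (f g : R -> R) x df dg : is_derive f (g x) df -> is_derive g x dg ->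
  is_derive (fun t => f (g t)) x (dg * df).
Proof. intros H1 H2. apply (is_derive_comp f g x df dg H1 H2). Qed.

Lemma D_plus (f g : R -> R) x df dg : is_derive f x df -> is_derive g x dg ->
  is_derive (fun t => f t + g t) x (df + dg).
Proof. intros H1 H2. apply (is_derive_plus f g x df dg H1 H2). Qed.

Lemma D_minus (f g : R -> R) x df dg : is_derive f x df -> is_derive g x dg ->
  is_derive (fun t => f t - g t) x (df - dg).
Proof. intros H1 H2. apply (is_derive_minus f g x df dg H1 H2). Qed.

Lemma D_id x : is_derive (fun t : R => t) x 1.
Proof. apply (is_derive_id (K:=R_AbsRing)). Qed.

Lemma D_const (a x : R) : is_derive (fun _ : R => a) x 0.
Proof. apply (is_derive_const (K:=R_AbsRing) (V:=R_NormedModule)). Qed.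

Lemma D_cont f x df : is_derive f x df -> continuity_pt f x.
Proof. intros H. apply continuity_pt_filterlim. apply (ex_derive_continuous (K:=R_AbsRing) (V:=R_NormedModule)). exists df; exact H. Qed.

Lemma loc_pos x : 0 < x -> locally x (fun t => 0 < t).
Proof. intros H. apply (open_gt 0 x H). Qed.

Lemma loc_neg x : x < 0 -> locally x (fun t => t < 0).
Proof. intros H. apply (open_lt 0 x H). Qed.

Lemma rpow_derive x a : 0 < x -> is_derive (fun y => rpow y a) x (a * rpow x (a-1)).
Proof.
  intros H. rewrite (rpow_pos x) by exact H.
  apply is_derive_ext_loc with (fun y => Rpower y a).
  - apply filter_imp with (2 := loc_pos x H). intros t Ht. rewrite rpow_pos; auto.
  - apply is_derive_Reals. apply derivable_pt_lim_power; exact H.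
Qed.

Lemma rpow_cont_pos x a : 0 < x -> continuity_pt (fun y => rpow y a) x.
Proof. intros H. eapply D_cont, rpow_derive, H. Qed.

Lemma Rpower_1_l a : Rpower 1 a = 1.
Proof. unfold Rpower. rewrite ln_1, Rmult_0_r. apply exp_0. Qed.

Lemma rpow_q_cont q t : 0 < q -> continuity_pt (fun y => rpow y q) t.
Proof.
  intros Hq. destruct (Rtotal_order t 0) as [Ht|[Ht|Ht]].
  - apply D_cont with 0. apply is_derive_ext_loc with (fun _ => 0).
    + apply filter_imp with (2 := loc_neg t Ht). intros u Hu. rewrite rpow_npos; lra.
    + apply D_const.
  - subst t. intros eps Heps. exists (Rpower eps (1/q)). split.
    + unfold Rpower; apply exp_pos.
    + intros x [_ Hx]. simpl in *. unfold R_dist in *.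
      rewrite (rpow_npos 0) by lra. rewrite Rminus_0_r in *.
      destruct (Rle_dec x 0). rewrite rpow_npos by auto. rewrite Rabs_R0; auto.
      rewrite rpow_pos by lra. rewrite Rabs_pos_eq by (unfold Rpower; left; apply exp_pos).
      rewrite Rabs_pos_eq in Hx by lra.
      replace eps with (Rpower (Rpower eps (1/q)) q).
      apply Rlt_Rpower_l; lra.
      rewrite Rpower_mult. replace (1/q*q) with 1 by (field; lra). apply Rpower_1; auto.
  - apply rpow_cont_pos; auto.
Qed.

Lemma rpow_q_mono q s t : 0 < q -> s <= t -> rpow s q <= rpow t q.
Proof.
  intros Hq H. destruct (Rle_dec s 0). rewrite (rpow_npos s) by auto. apply rpow_ge0.
  rewrite !rpow_pos by lra. apply Rle_Rpower_l; lra.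
Qed.

Lemma rpow_q_0 q : rpow 0 q = 0.
Proof. apply rpow_npos; lra. Qed.

Lemma rpow_1 q : rpow 1 q = 1.
Proof. rewrite rpow_pos by lra. apply Rpower_1_l. Qed.

Lemma rpow_q_lt1 q t : 0 < q -> t < 1 -> rpow t q < 1.
Proof.
  intros Hq H. destruct (Rle_dec t 0). rewrite rpow_npos; lra.
  rewrite rpow_pos by lra. rewrite <- (Rpower_1_l q). apply Rlt_Rpower_l; lra.
Qed.

Lemma rpow_q_ge1 q t : 0 < q -> 1 <= t -> 1 <= rpow t q.
Proof. intros Hq H. rewrite <- (rpow_1 q). apply rpow_q_mono; auto. Qed.

Lemma mvt_ex (D d : R -> R) a b : a < b ->
  (forall x, a <= x <= b -> continuity_pt D x) ->
  (forall x, a < x < b -> is_derive D x (d x)) ->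
  exists c, a < c < b /\ D b - D a = d c * (b - a).
Proof.
  intros Hab Hc Hd.
  pose (pr1 := fun c (P : a < c < b) =>
     exist (fun l => derivable_pt_lim D c l) (d c) (proj1 (is_derive_Reals _ _ _) (Hd c P))).
  destruct (MVT D id a b pr1 (fun c _ => derivable_pt_id c) Hab Hc
     (fun c _ => derivable_continuous_pt _ _ (derivable_pt_id c))) as [c [P HP]].
  exists c; split; auto. rewrite derive_pt_id in HP. simpl in HP. unfold id in HP. lra.
Qed.

Lemma mvt_pos (D d : R -> R) a b : a < b ->
  (forall x, a <= x <= b -> continuity_pt D x) ->
  (forall x, a < x < b -> is_derive D x (d x)) ->
  (forall x, a < x < b -> 0 < d x) -> D a < D b.
Proof.
  intros Hab Hc Hd Hp. destruct (mvt_ex D d a b Hab Hc Hd) as [c [Pc Hc']].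
  specialize (Hp c Pc). nra.
Qed.

Lemma mvt_zero (D d : R -> R) a b : a < b ->
  (forall x, a <= x <= b -> continuity_pt D x) ->
  (forall x, a < x < b -> is_derive D x (d x)) ->
  (forall x, a < x < b -> d x = 0) -> D a = D b.
Proof.
  intros Hab Hc Hd Hp. destruct (mvt_ex D d a b Hab Hc Hd) as [c [Pc Hc']].
  rewrite (Hp c Pc) in Hc'. lra.
Qed.

Section Gen.
Variables (q c a : R).
Hypothesis Hq : 0 < q.
Hypothesis Hc : c = 1 \/ c = -1.

Definition dom y := 0 < 1 + c * rpow y q.
Definition hf t := rpow (1 + c * rpow t q) a.
Definition Fc y := RInt hf 0 y.

Lemma dom_mono t y : t <= y -> dom y -> dom t.
Proof.
  unfold dom; intros H1 H2. destruct Hc as [->| ->].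
  - pose proof (rpow_ge0 t q); lra.
  - pose proof (rpow_q_mono q t y Hq H1); lra.
Qed.

Lemma dom_0 : dom 0.
Proof. unfold dom. rewrite rpow_q_0. lra. Qed.

Lemma u_cont y : continuity_pt (fun t => 1 + c * rpow t q) y.
Proof.
  apply continuity_pt_plus. apply continuity_pt_const; intros ? ?; auto.
  apply continuity_pt_scal with (f := fun t => rpow t q). apply rpow_q_cont; auto.
Qed.

Lemma dom_open y : dom y -> locally y dom.
Proof.
  intros H. pose proof (proj1 (continuity_pt_filterlim _ _) (u_cont y)) as Hf.
  apply Hf. apply (open_gt 0 _ H).
Qed.

Lemma hf_cont y : dom y -> continuity_pt hf y.
Proof.
  intros H. unfold hf.
  apply (continuity_pt_comp (fun t => 1 + c * rpow t q) (fun u => rpow u a)).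
  apply u_cont. apply rpow_cont_pos; exact H.
Qed.

Lemma hf_pos y : dom y -> 0 < hf y.
Proof. intros H; apply rpow_gt0; exact H. Qed.

Lemma Fc_ex z : dom z -> ex_RInt hf 0 z.
Proof.
  intros H. apply (ex_RInt_continuous (V:=R_CompleteNormedModule)). intros t Ht.
  apply continuity_pt_filterlim. apply hf_cont.
  apply dom_mono with (Rmax 0 z). apply Ht.
  unfold Rmax; destruct (Rle_dec 0 z); auto. apply dom_0.
Qed.

Lemma Fc_derive y : dom y -> is_derive Fc y (hf y).
Proof.
  intros H. apply (is_derive_RInt (V:=R_CompleteNormedModule) hf Fc 0 y).
  - apply filter_imp with (2 := dom_open y H). intros z Hz. apply (RInt_correct (V:=R_CompleteNormedModule)), Fc_ex, Hz.
  - apply continuity_pt_filterlim, hf_cont, H.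
Qed.

Lemma Fc_cont y : dom y -> continuity_pt Fc y.
Proof. intros H; eapply D_cont, Fc_derive, H. Qed.

Lemma Fc_0 : Fc 0 = 0.
Proof. unfold Fc. apply (RInt_point (V:=R_CompleteNormedModule)). Qed.

Lemma Fc_lt s t : s < t -> dom t -> Fc s < Fc t.
Proof.
  intros H1 H2. apply mvt_pos with hf; auto.
  - intros x Hx. apply Fc_cont. apply dom_mono with t; lra || auto. 
  - intros x Hx. apply Fc_derive. apply dom_mono with t; lra || auto.
  - intros x Hx. apply hf_pos. apply dom_mono with t; lra || auto.
Qed.

Lemma Fc_le s t : s <= t -> dom t -> Fc s <= Fc t.
Proof. intros H1 H2. destruct H1. left; apply Fc_lt; auto. subst; lra. Qed.

Lemma Fc_surj l u z : l < u -> dom u -> Fc l <= z <= Fc u ->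
  exists y, l <= y <= u /\ Fc y = z.
Proof.
  intros H1 H2 [H3 H4]. destruct H3 as [H3| <-]; [|exists l; split; lra].
  destruct H4 as [H4| ->]; [|exists u; split; lra].
  destruct (IVT_interv (fun y => Fc y - z) l u) as [y [Hy1 Hy2]]; auto; try lra.
  intros x Hx. apply continuity_pt_minus. apply Fc_cont. apply dom_mono with u; lra || auto.
  apply continuity_pt_const; intros ? ?; auto.
  exists y; split; auto; lra.
Qed.

Lemma Fc_inj s t : dom s -> dom t -> Fc s = Fc t -> s = t.
Proof.
  intros H1 H2 H3. destruct (Rtotal_order s t) as [H|[H|H]]; auto.
  pose proof (Fc_lt s t H H2); lra. pose proof (Fc_lt t s H H1); lra.
Qed.

Lemma Fc_inv (g : R -> R) x y0 :
  (forall z, (exists y, 0 <= y /\ dom y /\ Fc y = z) -> 0 <= g z /\ dom (g z) /\ Fc (g z) = z) ->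
  0 < x -> 0 <= y0 -> dom y0 -> x < Fc y0 ->
  0 < g x /\ dom (g x) /\ Fc (g x) = x /\ is_derive g x (1 / hf (g x)).
Proof.
  intros Hg Hx Hy0 Hd0 Hlt.
  assert (Hs : exists y, 0 <= y /\ dom y /\ Fc y = x).
  { assert (0 < y0). { destruct Hy0; auto. subst; rewrite Fc_0 in Hlt; lra. }
    destruct (Fc_surj 0 y0 x) as [y [Hy1 Hy2]]; auto. rewrite Fc_0; lra.
    exists y; repeat split; try lra; auto. apply dom_mono with y0; lra || auto. }
  destruct (Hg x Hs) as [Hs0 [Hsd HsF]].
  set (s := g x) in *.
  assert (Hsp : 0 < s). { destruct Hs0; auto. rewrite <- H in HsF. rewrite Fc_0 in HsF; lra. }
  assert (Hsy : s < y0). { destruct (Rlt_dec s y0); auto.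
    pose proof (Fc_le y0 s ltac:(lra) Hsd); lra. }
  set (lb := s/2).
  assert (Hwf : forall z, Fc lb <= z <= Fc y0 -> lb <= g z <= y0 /\ Fc (g z) = z).
  { intros z Hz. destruct (Fc_surj lb y0 z) as [y [Hy1 Hy2]]; auto. unfold lb; lra.
    destruct (Hg z) as [Hz0 [Hzd HzF]].
    { exists y. split; [unfold lb in *; lra|split; auto]. apply dom_mono with y0; [lra|auto]. }
    split; [split|exact HzF].
    - destruct (Rlt_dec (g z) lb) as [r|r]; [|lra].
      assert (dom lb) by (apply dom_mono with y0; [unfold lb; lra|auto]).
      pose proof (Fc_lt (g z) lb r H). lra.
    - destruct (Rlt_dec y0 (g z)) as [r|r]; [|lra]. pose proof (Fc_lt y0 (g z) r Hzd). lra. }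
  assert (Hlb : Fc lb < x). { rewrite <- HsF. apply Fc_lt; auto. unfold lb; lra. }
  assert (Hincr : forall u v, lb <= u -> u < v -> v <= y0 -> Fc u < Fc v).
  { intros u v _ H1 H2. apply Fc_lt; auto. apply dom_mono with y0; auto. }
  assert (Hgc : continuity_pt g x).
  { assert (Plb : lb < y0) by (unfold lb; lra).
    assert (Hcomp : forall z, Fc lb <= z -> z <= Fc y0 -> comp Fc g z = id z).
    { intros z H1 H2. destruct (Hwf z) as [_ E]; [lra|exact E]. }
    assert (Hgwf : forall z, Fc lb <= z -> z <= Fc y0 -> lb <= g z <= y0).
    { intros z H1 H2. destruct (Hwf z) as [E _]; [lra|exact E]. }
    assert (Hcont : forall z, lb <= z <= y0 -> continuity_pt Fc z).
    { intros z Hz. apply Fc_cont. apply dom_mono with y0; [lra|auto]. }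
    exact (continuity_pt_recip_interv Fc g lb y0 Plb Hincr Hcomp Hgwf Hcont x (conj Hlb Hlt)). }
  assert (Hdlb : dom lb) by (apply dom_mono with y0; [unfold lb; lra|auto]).
  assert (Hgl : g (Fc lb) = lb).
  { destruct (Hwf (Fc lb)) as [E1 E2]; [lra|].
    apply Fc_inj; auto. apply dom_mono with y0; [lra|auto]. }
  assert (Hgu : g (Fc y0) = y0).
  { destruct (Hwf (Fc y0)) as [E1 E2]; [lra|].
    apply Fc_inj; auto. apply dom_mono with y0; [lra|auto]. }
  assert (Prf : forall b, g (Fc lb) <= b <= g (Fc y0) -> derivable_pt Fc b).
  { intros b Hb. rewrite Hgl, Hgu in Hb. exists (hf b).
    apply is_derive_Reals, Fc_derive. apply dom_mono with y0; lra || auto. }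
  assert (Hinc : g (Fc lb) <= g x <= g (Fc y0)). { rewrite Hgl, Hgu. fold s; unfold lb; lra. }
  assert (Hder : forall pr : derivable_pt Fc (g x), derive_pt Fc (g x) pr = hf s).
  { intros pr. apply derive_pt_eq_0. apply is_derive_Reals, Fc_derive; auto. }
  pose proof (derivable_pt_lim_recip_interv Fc g (Fc lb) (Fc y0) x Prf Hgc
     ltac:(lra) ltac:(lra) Hinc) as HH.
  rewrite Hder in HH.
  split; [exact Hsp|split; [exact Hsd|split; [exact HsF|]]].
  apply is_derive_Reals. apply HH.
  intros z Hz. unfold comp, id. destruct (Hwf z) as [_ E]; [lra|exact E].
  pose proof (hf_pos s Hsd); lra.
Qed.

End Gen.

Definition Hm q m t := t * rpow (1 + m * rpow t q) (-(1/q)).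

Lemma Hm_cont q m t : 0 < q -> 0 < 1 + m * rpow t q -> continuity_pt (Hm q m) t.
Proof.
  intros Hq H. unfold Hm.
  apply continuity_pt_mult with (f1 := fun t => t) (f2 := fun t => rpow (1 + m * rpow t q) (-(1/q))).
  apply derivable_continuous_pt, derivable_pt_id.
  apply (continuity_pt_comp (fun t => 1 + m * rpow t q) (fun u => rpow u (-(1/q)))).
  apply continuity_pt_plus. apply continuity_pt_const; intros ? ?; auto.
  apply continuity_pt_scal with (f := fun t => rpow t q). apply rpow_q_cont; auto.
  apply rpow_cont_pos; exact H.
Qed.

Lemma Hm_derive q m t : 0 < q -> 0 < t -> 0 < 1 + m * rpow t q ->
  is_derive (Hm q m) t (rpow (1 + m * rpow t q) (-(1/q) - 1)).
Proof.
  intros Hq Ht H. unfold Hm.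
  assert (Hw : is_derive (fun t => 1 + m * rpow t q) t (0 + m * (q * rpow t (q - 1)))).
  { apply D_plus. apply D_const. apply is_derive_scal. apply rpow_derive; auto. }
  pose proof (D_comp (fun u => rpow u (-(1/q))) (fun t => 1 + m * rpow t q) t _ _
    (rpow_derive _ (-(1/q)) H) Hw) as Hc.
  pose proof (D_mult (fun t => t) _ t _ _ (D_id t) Hc) as HH. simpl in HH.
  match type of HH with is_derive _ _ ?v => replace (rpow (1 + m * rpow t q) (-(1/q) - 1)) with v; [exact HH|] end.
  set (W := 1 + m * rpow t q) in *.
  assert (E1 : rpow W (-(1/q)) = rpow W (-(1/q) - 1) * W).
  { rewrite !rpow_pos by auto. rewrite <- (Rpower_1 W) at 3 by auto. rewrite <- Rpower_plus. f_equal; ring. }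
  assert (E2 : t * rpow t (q - 1) = rpow t q).
  { rewrite !rpow_pos by auto. rewrite <- (Rpower_1 t) at 1 by auto. rewrite <- Rpower_plus. f_equal; ring. }
  rewrite E1. unfold W at 2. rewrite <- E2. field. lra.
Qed.

Lemma ln_ineq c k A : c = 1 \/ c = -1 -> 0 < k < 1 -> 0 < A -> 0 < 1 + c * A ->
  k * ln (1 + c * A) < ln (1 + c * k * A).
Proof.
  intros Hc Hk HA HcA.
  assert (Hpos : forall u, 0 <= u <= A -> 0 < 1 + c * u /\ 0 < 1 + c * k * u).
  { intros u Hu. destruct Hc; subst c; split; nra. }
  pose (psi := fun u => ln (1 + c * k * u) - k * ln (1 + c * u)).
  assert (H0 : psi 0 = 0). { unfold psi. rewrite !Rmult_0_r, Rplus_0_r, ln_1. ring. }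
  assert (Hlt : psi 0 < psi A).
  { apply mvt_pos with (d := fun u => c * k / (1 + c * k * u) - k * (c / (1 + c * u))).
    - exact HA.
    - intros u Hu. destruct (Hpos u Hu) as [P1 P2].
      apply D_cont with (c * k / (1 + c * k * u) - k * (c / (1 + c * u))).
      unfold psi. auto_derive. split; auto. field. lra.
    - intros u Hu. destruct (Hpos u ltac:(lra)) as [P1 P2].
      unfold psi. auto_derive. split; auto. field. lra.
    - intros u Hu. destruct (Hpos u ltac:(lra)) as [P1 P2].
      replace (c * k / (1 + c * k * u) - k * (c / (1 + c * u)))
        with ((c * c) * k * u * (1 - k) / ((1 + c * k * u) * (1 + c * u))) by (field; lra).
      assert (c * c = 1) by (destruct Hc; subst; ring). rewrite H.
      apply Rdiv_lt_0_compat; [|apply Rmult_lt_0_compat; auto]. apply Rmult_lt_0_compat; [|lra]. apply Rmult_lt_0_compat; lra. }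
  rewrite H0 in Hlt. unfold psi in Hlt. lra.
Qed.

Lemma key p q c A : 0 < q -> q / (q + 1) < p -> c = 1 \/ c = -1 -> 0 < A -> 0 < 1 + c * A ->
  rpow (1 + c * (q / (p * (q + 1))) * A) (-(1/q) - 1) < rpow (1 + c * A) (-(1/p)).
Proof.
  intros Hq Hp Hc HA HcA.
  assert (Hp0 : 0 < p). { apply Rlt_trans with (q/(q+1)); auto. apply Rdiv_lt_0_compat; lra. }
  assert (Hp1 : q < p * (q + 1)). { apply Rmult_lt_reg_r with (/(q+1)). apply Rinv_0_lt_compat; lra.
    rewrite Rmult_assoc, Rinv_r, Rmult_1_r by lra. exact Hp. }
  set (k := q / (p * (q + 1))).
  assert (Hk : 0 < k < 1). { unfold k; split. apply Rdiv_lt_0_compat; nra.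
    apply Rmult_lt_reg_r with (p * (q+1)). nra. unfold Rdiv. rewrite Rmult_assoc, Rinv_l by nra. lra. }
  assert (HcA2 : 0 < 1 + c * k * A). { destruct Hc; subst c; nra. }
  pose proof (ln_ineq c k A Hc Hk HA HcA) as HL.
  rewrite !rpow_pos by auto. unfold Rpower. apply exp_increasing.
  replace (-(1/q) - 1) with (-(1/(p*k))) by (unfold k; field; lra).
  replace (-(1/p)) with (-(1/(p*k)) * k) by (field; lra).
  assert (0 < 1/(p*k)) by (apply Rdiv_lt_0_compat; nra).
  set (L1 := ln (1 + c * A)) in *. set (L2 := ln (1 + c * k * A)) in *. nra.
Qed.

Lemma inv_rpow W p : 0 < W -> 0 < p -> rpow (1 / rpow W (-(1/p))) p = W.
Proof.
  intros HW Hp. rewrite (rpow_pos W) by auto. rewrite Rpower_Ropp.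
  assert (0 < Rpower W (1/p)) by (unfold Rpower; apply exp_pos).
  replace (1 / / Rpower W (1/p)) with (Rpower W (1/p)) by (field; lra).
  rewrite rpow_pos by auto. rewrite Rpower_mult. replace (1/p*p) with 1 by (field; lra).
  apply Rpower_1; auto.
Qed.

Lemma main_gen p q c (g : R -> R) x y0 :
  0 < q -> q / (q + 1) < p -> c = 1 \/ c = -1 ->
  (forall z, (exists y, 0 <= y /\ dom q c y /\ Fc q c (-(1/p)) y = z) ->
     0 <= g z /\ dom q c (g z) /\ Fc q c (-(1/p)) (g z) = z) ->
  0 < x -> 0 <= y0 -> dom q c y0 -> x < Fc q c (-(1/p)) y0 ->
  g x / x < rpow ((p + r_pq p q * rpow (Derive g x) p) / (p + r_pq p q)) (1/q).
Proof.
  intros Hq Hp Hc Hg Hx Hy0 Hd0 Hlt.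
  assert (Hp0 : 0 < p). { apply Rlt_trans with (q/(q+1)); auto. apply Rdiv_lt_0_compat; lra. }
  assert (Hp1 : q < p * (q + 1)). { apply Rmult_lt_reg_r with (/(q+1)). apply Rinv_0_lt_compat; lra.
    rewrite Rmult_assoc, Rinv_r, Rmult_1_r by lra. exact Hp. }
  set (k := q / (p * (q + 1))).
  assert (Hk : 0 < k < 1). { unfold k; split. apply Rdiv_lt_0_compat; nra.
    apply Rmult_lt_reg_r with (p * (q+1)). nra. unfold Rdiv. rewrite Rmult_assoc, Rinv_l by nra. lra. }
  destruct (Fc_inv q c (-(1/p)) Hq Hc g x y0 Hg Hx Hy0 Hd0 Hlt) as [Hs0 [Hsd [HsF Hder]]].
  rewrite (is_derive_unique _ _ _ Hder).
  set (s := g x) in *.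
  unfold hf. set (A := rpow s q).
  assert (HA : 0 < A) by (apply rpow_gt0; auto).
  assert (HW : 0 < 1 + c * A) by exact Hsd.
  rewrite inv_rpow by auto.
  replace ((p + r_pq p q * (1 + c * A)) / (p + r_pq p q)) with (1 + c * k * A).
  2:{ unfold r_pq, k. field. split; [|split]; try lra; nra. }
  assert (Hposk : forall t, dom q c t -> 0 < 1 + c * k * rpow t q).
  { intros t Ht. unfold dom in Ht. pose proof (rpow_ge0 t q). destruct Hc; subst c; nra. }
  assert (HV : 0 < 1 + c * k * A) by (apply Hposk; exact Hsd).
  assert (Hcmp : Hm q (c * k) s < x).
  { rewrite <- HsF.
    assert (E : Fc q c (-(1/p)) 0 - Hm q (c * k) 0 < Fc q c (-(1/p)) s - Hm q (c * k) s).
    { apply mvt_pos with (D := fun t => Fc q c (-(1/p)) t - Hm q (c * k) t) (d := fun t => hf q c (-(1/p)) t - rpow (1 + c * k * rpow t q) (-(1/q) - 1)).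
      - exact Hs0.
      - intros t Ht. assert (dom q c t) by (apply dom_mono with s; auto; lra).
        apply continuity_pt_minus; [apply Fc_cont; auto | apply Hm_cont; [auto | apply Hposk; auto]].
      - intros t Ht. assert (dom q c t) by (apply dom_mono with s; auto; lra).
        apply D_minus; [apply Fc_derive; auto | apply Hm_derive; [auto | lra | apply Hposk; auto]].
      - intros t Ht. assert (dom q c t) by (apply dom_mono with s; auto; lra).
        unfold hf. pose proof (key p q c (rpow t q) Hq Hp Hc ltac:(apply rpow_gt0; lra) H). 
        fold k in H0. lra. }
    rewrite Fc_0 in E. unfold Hm at 1 in E. lra. }
  unfold Hm in Hcmp. fold A in Hcmp.
  rewrite (rpow_pos (1 + c * k * A)) in * by auto. rewrite Rpower_Ropp in Hcmp.
  assert (HR : 0 < Rpower (1 + c * k * A) (1/q)) by (unfold Rpower; apply exp_pos).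
  set (R0 := Rpower (1 + c * k * A) (1/q)) in *.
  apply Rmult_lt_reg_r with x; auto. unfold Rdiv. rewrite Rmult_assoc, Rinv_l, Rmult_1_r by lra.
  apply Rmult_lt_reg_r with (/ R0). apply Rinv_0_lt_compat; auto.
  rewrite (Rmult_comm R0 x), Rmult_assoc, Rinv_r, Rmult_1_r by lra. exact Hcmp.
Qed.

Lemma F_eq p q y : F_pq p q y = Fc q (-1) (-(1/p)) y.
Proof.
  unfold F_pq, Fc, hf. apply (RInt_ext (V:=R_CompleteNormedModule)). intros t _.
  replace (1 + -1 * rpow t q) with (1 - rpow t q) by ring. reflexivity.
Qed.

Lemma G_eq p q y : G_pq p q y = Fc q 1 (-(1/p)) y.
Proof.
  unfold G_pq, Fc, hf. apply (RInt_ext (V:=R_CompleteNormedModule)). intros t _.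
  replace (1 + 1 * rpow t q) with (1 + rpow t q) by ring. reflexivity.
Qed.

Lemma dom_m1 q y : 0 < q -> (dom q (-1) y <-> y < 1).
Proof.
  intros Hq. unfold dom. split; intros H.
  - destruct (Rlt_dec y 1); auto. pose proof (rpow_q_ge1 q y Hq ltac:(lra)). lra.
  - pose proof (rpow_q_lt1 q y Hq H). lra.
Qed.

Lemma dom_1 q y : dom q 1 y.
Proof. unfold dom. pose proof (rpow_ge0 y q). lra. Qed.

Lemma lub_ex p q (x : R) : Rbar_lt x (half_pi_pq p q) -> exists y, 0 <= y < 1 /\ x < F_pq p q y.
Proof.
  intros H. destruct (classic (exists y, 0 <= y < 1 /\ x < F_pq p q y)) as [E|E]; auto.
  exfalso. unfold half_pi_pq in H.
  destruct (Lub_Rbar_correct (fun z => exists y, 0 <= y < 1 /\ z = F_pq p q y)) as [_ Hl].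
  assert (Hub : is_ub_Rbar (fun z => exists y, 0 <= y < 1 /\ z = F_pq p q y) x).
  { intros z [y [Hy ->]]. simpl. destruct (Rle_dec (F_pq p q y) x) as [Hr|Hr]; [exact Hr|].
    exfalso; apply E; exists y; split; auto; lra. }
  specialize (Hl _ Hub). apply (Rbar_lt_not_le _ _ H Hl).
Qed.

Lemma range_sinh p q y : 0 < q -> q / (q + 1) < p -> 0 <= y < 1 ->
  G_pq p q (Hm q (-1) y) = F_pq (r_pq p q) q y.
Proof.
  intros Hq Hp Hy. rewrite G_eq, F_eq.
  assert (Hp0 : 0 < p). { apply Rlt_trans with (q/(q+1)); auto. apply Rdiv_lt_0_compat; lra. }
  assert (Hp1 : q < p * (q + 1)). { apply Rmult_lt_reg_r with (/(q+1)). apply Rinv_0_lt_compat; lra.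
    rewrite Rmult_assoc, Rinv_r, Rmult_1_r by lra. exact Hp. }
  assert (Hc1 : (1 = 1 \/ 1 = -1)) by (left; reflexivity).
  assert (Hcm : (-1 = 1 \/ -1 = -1)) by (right; reflexivity).
  assert (Hdm : forall t, t <= y -> 0 < 1 + -1 * rpow t q).
  { intros t Ht. pose proof (rpow_q_lt1 q t Hq ltac:(lra)). lra. }
  destruct (proj1 Hy) as [Hy0| <-].
  2:{ unfold Hm. rewrite Rmult_0_l, !Fc_0; auto. }
  set (r := r_pq p q).
  pose (D := fun t => Fc q 1 (-(1/p)) (Hm q (-1) t) - Fc q (-1) (-(1/r)) t).
  assert (E : D 0 = D y).
  { apply mvt_zero with (d := fun t => rpow (1 + -1 * rpow t q) (-(1/q) - 1) * hf q 1 (-(1/p)) (Hm q (-1) t)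
        - hf q (-1) (-(1/r)) t).
    - exact Hy0.
    - intros t Ht. unfold D. apply continuity_pt_minus.
      + apply (continuity_pt_comp (Hm q (-1)) (Fc q 1 (-(1/p)))).
        apply Hm_cont; [auto|apply Hdm; lra]. apply Fc_cont; auto. apply dom_1.
      + apply Fc_cont; auto. apply Hdm; lra.
    - intros t Ht. unfold D. apply D_minus.
      + apply (D_comp (Fc q 1 (-(1/p))) (Hm q (-1))).
        apply Fc_derive; auto. apply dom_1. apply Hm_derive; [auto|lra|apply Hdm; lra].
      + apply Fc_derive; auto. apply Hdm; lra.
    - intros t Ht. unfold hf, Hm.
      pose proof (Hdm t ltac:(lra)) as HW.
      assert (HA : 0 < rpow t q) by (apply rpow_gt0; lra).
      set (A := rpow t q) in *. set (W := 1 + -1 * A) in *.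
      assert (E1 : rpow (t * rpow W (-(1/q))) q = A * / W).
      { assert (0 < rpow W (-(1/q))) by (apply rpow_gt0; auto).
        rewrite (rpow_pos (t * _)) by (apply Rmult_lt_0_compat; lra).
        rewrite <- Rpower_mult_distr by lra. unfold A. rewrite (rpow_pos t) by lra. f_equal.
        rewrite (rpow_pos W) by auto. rewrite Rpower_mult.
        replace (-(1/q) * q) with (-(1)) by (field; lra). rewrite Rpower_Ropp, Rpower_1; auto. }
      rewrite E1.
      replace (1 + 1 * (A * / W)) with (Rpower W (-(1))) by (rewrite Rpower_Ropp, Rpower_1 by auto; assert (HAW : A = 1 - W) by (unfold W; ring); rewrite HAW; field; lra).
      rewrite (rpow_pos (Rpower W _)) by (unfold Rpower; apply exp_pos).
      rewrite !(rpow_pos W) by auto. rewrite Rpower_mult, <- Rpower_plus.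
      replace (- (1 / q) - 1 + - (1) * - (1 / p)) with (-(1/r)). ring.
      unfold r, r_pq. field. split; [|split]; try lra; nra. }
  unfold D in E. unfold Hm in E at 1. rewrite Rmult_0_l, !Fc_0 in E; auto. lra.
Qed.

Theorem theorem3p5 (p q : R) (hq : 0 < q) (hp : q / (q + 1) < p) :
  (forall x : R, 0 < x -> Rbar_lt (Finite x) (half_pi_pq p q) ->
     sin_pq p q x / x <
     rpow ((p + r_pq p q * rpow (cos_pq p q x) p) / (p + r_pq p q)) (1 / q)) /\
  (forall x : R, 0 < x -> Rbar_lt (Finite x) (half_pi_pq (r_pq p q) q) ->
     sinh_pq p q x / x <
     rpow ((p + r_pq p q * rpow (cosh_pq p q x) p) / (p + r_pq p q)) (1 / q)).
Proof.
  split.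
  - intros x Hx Hlt. destruct (lub_ex p q x Hlt) as [y0 [Hy0 Hy0F]].
    unfold cos_pq.
    apply (main_gen p q (-1) (sin_pq p q) x y0 hq hp (or_intror eq_refl)); auto.
    + intros z [y [H1 [H2 H3]]]. unfold sin_pq.
      destruct (epsilon_spec (inhabits 0) (fun y => 0 <= y < 1 /\ F_pq p q y = z)) as [E1 E2].
      { exists y. split. split; auto. apply (dom_m1 q y hq); auto. rewrite F_eq; auto. }
      split; [lra|split]. apply (dom_m1 q _ hq); lra. rewrite <- F_eq; auto.
    + lra.
    + apply (dom_m1 q y0 hq); lra.
    + rewrite <- F_eq; auto.
  - intros x Hx Hlt. destruct (lub_ex (r_pq p q) q x Hlt) as [y0 [Hy0 Hy0F]].
    unfold cosh_pq.
    apply (main_gen p q 1 (sinh_pq p q) x (Hm q (-1) y0) hq hp (or_introl eq_refl)); auto.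
    + intros z [y [H1 [H2 H3]]]. unfold sinh_pq.
      destruct (epsilon_spec (inhabits 0) (fun y => 0 <= y /\ G_pq p q y = z)) as [E1 E2].
      { exists y. split; auto. rewrite G_eq; auto. }
      split; [lra|split]. apply dom_1. rewrite <- G_eq; auto.
    + unfold Hm. apply Rmult_le_pos. lra. apply rpow_ge0.
    + apply dom_1.
    + rewrite <- G_eq. rewrite range_sinh; auto.
Qed.
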